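(* Let $p$ be a prime and let $P_p=\sum_{k=0}^{p-2}a_kp^k$, with digits $a_k\in\{0,1,\dots,p-1\}$ (so $P_p<p^{p-1}$), be a positive period of the Bell numbers modulo $p$, i.e. $B_{n+P_p}\equiv B_n\pmod p$ for all $n\geq 0$ (not necessarily the minimal period). Then \[ \sum_{k=0}^{p-2}a_k\geq p+1. \]
   Context: $B_n$ is the $n$-th Bell number, the number of partitions of an $n$-element set into nonempty blocks. *)

(* Defs.v *)
From mathcomp Require Import all_boot.
Set Implicit Arguments. Unset Strict Implicit. Unset Printing Implicit Defensive.

(* B_n : the number of partitions of the n-element set 'I_n into nonempty
   blocks (mathcomp's [partition] requires blocks to be nonempty, pairwise
   disjoint, and covering). *)
Definition bell (n : nat) : nat :=
  #|[set P : {set {set 'I_n}} | partition P [set: 'I_n]]|.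

(* Main.v *)
Require Import Defs.
From mathcomp Require Import all_boot.
From mathcomp Require Import all_order all_algebra all_field all_fingroup all_solvable.
From mathcomp Require Import ring.
Set Implicit Arguments. Unset Strict Implicit. Unset Printing Implicit Defensive.
Import Order.TTheory GRing.Theory Num.Theory.

Open Scope ring_scope.

Section Act.
Context {F : fieldType}.
Implicit Types (h g : {poly F}) (u v w : nat -> F).

Definition act (h : {poly F}) (u : nat -> F) (n : nat) : F :=
  \sum_(i < size h) h`_i * u (n + i)%N.

Lemma act_widen h u n N : (size h <= N)%N ->
  act h u n = \sum_(i < N) h`_i * u (n + i)%N.
Proof.
move=> hN; rewrite /act (big_ord_widen N (fun i : nat => h`_i * u (n + i)%N) hN).
rewrite big_mkcond; apply: eq_bigr => i _; case: ifP => // /negbT.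
by rewrite -leqNgt => hi; rewrite nth_default // mul0r.
Qed.
Arguments act_widen h u n N : clear implicits.

Lemma act_ext h v w n : (forall m, v m = w m) -> act h v n = act h w n.
Proof. by move=> e; apply: eq_bigr => i _; rewrite e. Qed.

Lemma act0 u n : act 0 u n = 0.
Proof. by rewrite /act size_poly0 big_ord0. Qed.

Lemma actD h g u n : act (h + g) u n = act h u n + act g u n.
Proof.
set N := maxn (size h) (size g).
rewrite !(act_widen _ _ _ N) ?leq_maxl ?leq_maxr ?size_polyD //.
by rewrite -big_split; apply: eq_bigr => i _; rewrite coefD mulrDl.
Qed.

Lemma actN h u n : act (- h) u n = - act h u n.
Proof.
rewrite !(act_widen _ _ _ (size h)) ?size_polyN //.
by rewrite -sumrN; apply: eq_bigr => i _; rewrite coefN mulNr.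
Qed.

Lemma actZ c h u n : act (c *: h) u n = c * act h u n.
Proof.
rewrite !(act_widen _ _ _ (size h)) ?size_scale_leq //.
by rewrite mulr_sumr; apply: eq_bigr => i _; rewrite coefZ mulrA.
Qed.

Lemma actC c u n : act c%:P u n = c * u n.
Proof.
rewrite (act_widen _ _ _ 1) ?size_polyC_leq1 // big_ord1 coefC /=.
by rewrite addn0.
Qed.

Lemma actMX h u n : act (h * 'X) u n = act h u n.+1.
Proof.
have [->|h0] := eqVneq h 0; first by rewrite mul0r !act0.
rewrite /act size_mulX // big_ord_recl coefMX /= mul0r add0r.
by apply: eq_bigr => i _; rewrite coefMX /= addnS addSn.
Qed.

Lemma actM g h u n : act (g * h) u n = act g (act h u) n.
Proof.
elim/poly_ind: g u n h => [|g c IH] u n h; first by rewrite mul0r !act0.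
rewrite mulrDl mul_polyC actD actZ actD actC actMX.
rewrite -mulrA -(commr_polyX h) mulrA actMX IH.
by congr (_ + _); apply: act_ext => m; rewrite actMX.
Qed.

End Act.

Definition ann {F : fieldType} (u : nat -> F) (h : {poly F}) := forall n, act h u n = 0.

Lemma ann0 (F : fieldType) (u : nat -> F) : ann u 0.
Proof. by move=> n; rewrite act0. Qed.
Lemma annD (F : fieldType) (u : nat -> F) h g : ann u h -> ann u g -> ann u (h + g).
Proof. by move=> a b n; rewrite actD a b addr0. Qed.
Lemma annN (F : fieldType) (u : nat -> F) h : ann u h -> ann u (- h).
Proof. by move=> a n; rewrite actN a oppr0. Qed.
Lemma annB (F : fieldType) (u : nat -> F) h g : ann u h -> ann u g -> ann u (h - g).
Proof. by move=> a b; apply: annD => //; apply: annN. Qed.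
Lemma annM (F : fieldType) (u : nat -> F) g h : ann u h -> ann u (g * h).
Proof.
move=> a n; rewrite actM (act_ext _ (w := fun _ => 0)) //.
by rewrite /act big1 // => i _; rewrite mulr0.
Qed.
Lemma annX (F : fieldType) (u : nat -> F) h k : ann u h -> ann u (h ^+ k.+1).
Proof. by move=> a; rewrite exprSr; apply: annM. Qed.

Lemma annXp (F : fieldType) (u : nat -> F) h k : (0 < k)%N -> ann u h -> ann u (h ^+ k).
Proof. by case: k => // k _; apply: annX. Qed.

Lemma act_Xn (F : fieldType) (u : nat -> F) k n : act 'X^k u n = u (n + k)%N.
Proof.
elim: k n => [|k IH] n; first by rewrite expr0 -polyC1 actC mul1r addn0.
by rewrite exprSr actMX IH addSnnS.
Qed.

Section Fp.
Context (p : nat) (pp : prime p).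
Local Notation F := 'F_p.

Lemma chP : p \in [pchar {poly F}].
Proof. by rewrite pchar_poly pchar_Fp. Qed.

Lemma frobD (x y : {poly F}) : (x + y) ^+ p = x ^+ p + y ^+ p.
Proof. exact: (pFrobenius_autD_comm chP (mulrC x y)). Qed.

Lemma frobB (x y : {poly F}) : (x - y) ^+ p = x ^+ p - y ^+ p.
Proof. exact: (pFrobenius_autB_comm chP (mulrC x y)). Qed.

Lemma frobC (c : F) : c ^+ p = c.
Proof. by rewrite -{2}(expf_card c) card_Fp. Qed.

Lemma frob (g : {poly F}) : g ^+ p = g \Po 'X^p.
Proof.
elim/poly_ind: g => [|g c IH].
  by rewrite comp_poly0 expr0n eqn0Ngt prime_gt0.
rewrite frobD exprMn IH -polyC_exp frobC comp_polyD comp_polyM comp_polyX.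
by rewrite comp_polyC.
Qed.

Lemma comp_diff (g A B : {poly F}) : exists k, (g \Po A) - (g \Po B) = k * (A - B).
Proof.
move: g; apply: poly_ind => [|g c [k IH]].
  by exists 0; rewrite !comp_poly0 subrr mul0r.
exists (k * A + (g \Po B)).
rewrite !comp_polyD !comp_polyM !comp_polyX !comp_polyC.
have -> : g \Po A = k * (A - B) + (g \Po B) by rewrite -IH subrK.
ring.
Qed.

Definition fT : {poly F} := 'X^p - 'X - 1.

Lemma ann_shift (u : nat -> F) g : ann u fT -> ann u g -> ann u (g \Po ('X + 1)).
Proof.
move=> af ag; have [k Hk] := comp_diff g ('X^p) ('X + 1).
have -> : g \Po ('X + 1) = g ^+ p - k * fT.
  have -> : fT = 'X^p - ('X + 1) by rewrite /fT; ring.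
  by rewrite frob -Hk; ring.
apply: annB; last exact: annM.
exact: annXp (prime_gt0 pp) ag.
Qed.


Lemma size_sub_lt (A B : {poly F}) : size A = size B -> lead_coef A = lead_coef B ->
  (0 < size A)%N -> (size (A - B)%R < size A)%N.
Proof.
move=> sAB lAB s0.
have h : (size (A - B)%R <= (size A).-1)%N.
  apply/leq_sizeP => j hj; rewrite coefB.
  have [->|ne] := eqVneq j (size A).-1.
    by rewrite {2}sAB -!lead_coefE lAB subrr.
  have hj' : (size A <= j)%N by rewrite -(prednK s0) ltn_neqAle eq_sym ne hj.
  by rewrite !nth_default ?subrr // -sAB.
by apply: (leq_ltn_trans h); rewrite ltn_predL.
Qed.

Lemma Fp_all (x : F) : x = (val x)%:R.
Proof. by rewrite natr_Zp. Qed.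

Lemma key (u : nat -> F) : u 0%N = 1 -> ann u fT ->
  forall h, ann u h -> (size h <= p)%N -> h = 0.
Proof.
move=> u0 af h; move: {2}(size h) (leqnn (size h)) => m.
elim: m h => [|m IH] h hs ah hp.
  by apply/eqP; rewrite -size_poly_eq0 -leqn0.
have [->|h0] := eqVneq h 0; first by [].
set h1 := h \Po ('X + 1) - h.
have ah1 : ann u h1 := annB (ann_shift af ah) ah.
have sX : size ('X + 1 : {poly F}) = 2 by rewrite -polyC1 size_XaddC.
have sh : size (h \Po ('X + 1)) = size h by rewrite size_comp_poly2.
have lh : lead_coef (h \Po ('X + 1)) = lead_coef h.
  by rewrite lead_coef_comp ?sX // -polyC1 lead_coefXaddC expr1n mulr1.
have s1 : (size h1 < size h)%N.
  have := @size_sub_lt (h \Po ('X + 1)) h sh lh.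
  by rewrite sh size_poly_gt0 h0; apply.
have h1z : h1 = 0.
  apply: IH => //; last exact: leq_trans (ltnW s1) hp.
  by rewrite -ltnS; apply: leq_trans s1 hs.
have hq : h \Po ('X + 1) = h by apply/eqP; rewrite -subr_eq0 -/h1 h1z.
have hc : forall k : nat, h.[k%:R] = h.[0].
  elim=> [|k IHk]; first by [].
  by rewrite -IHk -{2}hq horner_comp hornerD hornerX -polyC1 hornerC mulrSr.
have q0 : h - (h.[0])%:P = 0.
  apply/eqP; apply: contraT => nz.
  have := max_poly_roots nz (rs := enum F).
  have -> : all (root (h - (h.[0])%:P)) (enum F).
    by apply/allP => x _; rewrite rootE hornerD hornerN hornerC (Fp_all x) hc subrr.
  rewrite enum_uniq -cardE (card_Fp pp) => /(_ isT isT) hl.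
  have := leq_trans hl (size_polyD _ _).
  by rewrite size_polyN leq_max ltnNge hp /= ltnNge (leq_trans (size_polyC_leq1 _) (prime_gt0 pp)).
have hC : h = (h.[0])%:P by apply/eqP; rewrite -subr_eq0 q0.
have := ah 0%N; rewrite hC actC u0 mulr1 => ->.
by rewrite polyC0.
Qed.

End Fp.

Section Main.
Context (p : nat) (pp : prime p).
Local Notation F := 'F_p.

Lemma cong_prod (u : nat -> F) n (G H : nat -> {poly F}) :
  (forall k, (k < n)%N -> ann u (G k - H k)) ->
  ann u (\prod_(k < n) G k - \prod_(k < n) H k).
Proof.
elim: n => [|n IH] hk; first by rewrite !big_ord0 subrr; apply: ann0.
rewrite !big_ord_recr /=.
set A1 := \prod_(i < n) G i; set B1 := \prod_(i < n) H i.
have -> : A1 * G n - B1 * H n = G n * (A1 - B1) + B1 * (G n - H n) by ring.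
apply: annD; apply: annM; last exact: hk.
by apply: IH => k lk; apply: hk; apply: ltnW.
Qed.

Lemma cong_exp (u : nat -> F) m (A B : {poly F}) :
  ann u (A - B) -> ann u (A ^+ m - B ^+ m).
Proof.
move=> h; elim: m => [|m IH]; first by rewrite !expr0 subrr; apply: ann0.
have -> : A ^+ m.+1 - B ^+ m.+1 = A ^+ m * (A - B) + B * (A ^+ m - B ^+ m).
  by rewrite !exprS; ring.
by apply: annD; apply: annM.
Qed.

Lemma congXk (u : nat -> F) : ann u (fT p) ->
  forall k, ann u ('X^(p ^ k) - ('X + (k%:R)%:P)).
Proof.
move=> af; elim=> [|k IH].
  by rewrite expn0 expr1 polyC0 addr0 subrr; apply: ann0.
have -> : 'X^(p ^ k.+1) - ('X + (k.+1%:R)%:P) =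
   ('X^(p ^ k) - ('X + (k%:R)%:P)) ^+ p + fT p.
  rewrite (frobB pp) (frobD pp) -exprM -polyC_exp (frobC pp) expnSr /fT.
  rewrite mulrSr polyCD polyC1; ring.
by apply: annD => //; apply: annXp (prime_gt0 pp) IH.
Qed.

Lemma XP_prod n (a : nat -> nat) :
  'X^(\sum_(k < n) a k * p ^ k) = \prod_(k < n) ('X^(p ^ k)) ^+ a k :> {poly F}.
Proof.
elim: n => [|n IH]; first by rewrite !big_ord0 expr0.
by rewrite !big_ord_recr /= exprD IH mulnC exprM.
Qed.

Lemma size_q n (a : nat -> nat) :
  let q := \prod_(k < n) ('X + (k%:R)%:P) ^+ a k : {poly F} in
  q \is monic /\ size q = (\sum_(k < n) a k).+1.
Proof.
elim: n => [|n [IHm IHs]] /=.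
  by rewrite !big_ord0 monic1 size_poly1.
rewrite !big_ord_recr /=.
have mX : ('X + (n%:R)%:P : {poly F}) ^+ a n \is monic.
  by apply: monic_exp; apply: monicXaddC.
split; first by rewrite monicMl.
rewrite size_monicM ?monic_neq0 // IHs.
have := size_exp ('X + (n%:R)%:P : {poly F}) (a n); rewrite size_XaddC mul1n => e.
have : (0 < size (('X + (n%:R)%:P) ^+ a n : {poly F}))%N.
  by rewrite size_poly_gt0 monic_neq0.
move=> h; rewrite -(prednK h) e.
by rewrite addSn addnS.
Qed.


Lemma alg_main (u : nat -> F) (a : nat -> nat) :
  u 0%N = 1 -> (forall n, u (n + p)%N = u n + u n.+1) ->
  (0 < \sum_(k < p.-1) a k * p ^ k)%N ->
  (forall n, u (n + \sum_(k < p.-1) a k * p ^ k)%N = u n) ->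
  (p.+1 <= \sum_(k < p.-1) a k)%N.
Proof.
move=> u0 uT P0 uP.
set P := (\sum_(k < p.-1) a k * p ^ k)%N in P0 uP.
set s := (\sum_(k < p.-1) a k)%N.
have p1 : (1 < p)%N := prime_gt1 pp.
have af : ann u (fT p).
  move=> n; rewrite /fT !actD !actN -{2}(expr1 'X) -(expr0 'X) !act_Xn.
  by rewrite addn0 addn1 uT; ring.
have aP : ann u ('X^P - 1).
  by move=> n; rewrite actD actN -(expr0 'X) !act_Xn addn0 uP subrr.
set q := \prod_(k < p.-1) ('X + (k%:R)%:P) ^+ a k : {poly F}.
have aq : ann u (q - 1).
  have aXq : ann u ('X^P - q).
    rewrite /P /q XP_prod; apply: (@cong_prod u p.-1 (fun k => 'X^(p^k) ^+ a k) (fun k => ('X + (k%:R)%:P) ^+ a k)) => k _; apply: cong_exp.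
    exact: congXk.
  have -> : q - 1 = ('X^P - 1) - ('X^P - q) by ring.
  exact: annB.
have [mq sq] := size_q p.-1 a.
rewrite -/q -/s in mq sq.
rewrite leqNgt; apply/negP => hs.
have s1 : (0 < s)%N.
  rewrite lt0n; apply/negP => /eqP s0.
  move: P0; rewrite /P big1 // => k _.
  have : (a k <= s)%N by rewrite /s (bigD1 k) //= leq_addr.
  by rewrite s0 leqn0 => /eqP ->.
have sq1 : size (q - 1) = s.+1 by rewrite size_polyDl sq // size_polyN size_poly1 ltnS.
have mq1 : q - 1 \is monic.
  by rewrite monicE lead_coefDl ?size_polyN ?size_poly1 ?sq // -monicE.
set g := 'X^(p - s) * (q - 1).
have ag : ann u g by apply: annM.
have sg : size g = p.+1.
  by rewrite size_monicM ?monicXn ?monic_neq0 // size_polyXn sq1 addSn addnS /= subnK.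
have mg : g \is monic by rewrite monicMl ?monicXn.
have eF : fT p = 'X^p + (- ('X + 1)) by rewrite /fT; ring.
have sX : size (- ('X + 1) : {poly F}) = 2 by rewrite size_polyN -polyC1 size_XaddC.
have sF : size (fT p) = p.+1 by rewrite eF size_polyDl ?size_polyXn // sX.
have mF : fT p \is monic.
  by rewrite monicE eF lead_coefDl ?size_polyXn ?sX // lead_coefXn.
have gF : g = fT p.
  apply/eqP; rewrite -subr_eq0; apply/eqP; apply: (key pp u0 af).
    exact: annB.
  have := size_sub_lt (A := g) (B := fT p).
  rewrite sg sF (eqP mg) (eqP mF) => /(_ erefl erefl isT).
  by rewrite ltnS.
have := congr1 (fun r => r.[1]) gF; rewrite /= /g /fT.
rewrite !hornerE /= expr1n mul1r.
rewrite expr1n => /(congr1 (fun x => x + 1)); rewrite subrK.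
have -> : (1 - 1 - 1 + 1 : F) = 0 by ring.
apply/eqP; rewrite /q horner_prod; apply/prodf_neq0 => k _.
rewrite horner_exp expf_neq0 // hornerD hornerX hornerC nat1r.
apply/eqP => h; have := val_Fp_nat pp k.+1; rewrite h /= modn_small //.
have := ltn_ord k; rewrite -ltnS prednK ?prime_gt0 //.
Qed.

End Main.

Definition isEq {T : finType} (R : {set T * T}) : bool :=
  [forall x, (x, x) \in R] &&
  [forall x, forall y, ((x, y) \in R) ==> ((y, x) \in R)] &&
  [forall x, forall y, forall z, ((x, y) \in R) ==> ((y, z) \in R) ==> ((x, z) \in R)].

Definition eqrels (T : finType) := [set R : {set T * T} | isEq R].

Lemma isEqP {T : finType} (R : {set T * T}) :
  reflect ((forall x, (x, x) \in R) /\ (forall x y, (x, y) \in R -> (y, x) \in R) /\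
           (forall x y z, (x, y) \in R -> (y, z) \in R -> (x, z) \in R)) (isEq R).
Proof.
apply: (iffP idP).
  move=> /andP[/andP[/forallP r /forallP s] /forallP t]; split=> //; split.
    by move=> x y; move: (s x) => /forallP /(_ y) /implyP.
  by move=> x y z; move: (t x) => /forallP /(_ y) /forallP /(_ z) /implyP h /h /implyP.
case=> r [s t]; apply/andP; split; first (apply/andP; split).
- by apply/forallP.
- by apply/forallP => x; apply/forallP => y; apply/implyP; apply: s.
by apply/forallP => x; apply/forallP => y; apply/forallP => z; apply/implyP => h1;
  apply/implyP; apply: t h1.
Qed.

Definition pb {T T' : finType} (f : T' -> T) (R : {set T * T}) : {set T' * T'} :=
  [set xy | (f xy.1, f xy.2) \in R].

Lemma in_pb {T T' : finType} (f : T' -> T) (R : {set T * T}) x y : ((x, y) \in pb f R) = ((f x, f y) \in R).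
Proof. by rewrite inE. Qed.

Lemma pb_eq {T T' : finType} (f : T' -> T) (R : {set T * T}) : isEq R -> isEq (pb f R).
Proof.
case/isEqP => r [s t]; apply/isEqP; split; first by move=> x; rewrite in_pb.
split; first by move=> x y; rewrite !in_pb; apply: s.
by move=> x y z; rewrite !in_pb; apply: t.
Qed.

Lemma pb_comp {T T' T'' : finType} (f : T' -> T) (g : T'' -> T') (R : {set T * T}) :
  pb g (pb f R) = pb (fun x => f (g x)) R.
Proof. by apply/setP => -[x y]; rewrite !in_pb. Qed.

Lemma pb_ext {T T' : finType} (f g : T' -> T) (R : {set T * T}) : (forall x, f x = g x) -> pb f R = pb g R.
Proof. by move=> e; apply/setP => -[x y]; rewrite !in_pb !e. Qed.

Lemma pb_id {T : finType} (R : {set T * T}) : pb (fun x => x) R = R.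
Proof. by apply/setP => -[x y]; rewrite !in_pb. Qed.

Lemma card_bij {X Y : finType} (A : {set X}) (B : {set Y}) (f : X -> Y) (g : Y -> X) :
  {in A, forall x, f x \in B} -> {in B, forall y, g y \in A} ->
  {in A, cancel f g} -> {in B, cancel g f} -> #|A| = #|B|.
Proof.
move=> fA gB fK gK; rewrite -(card_in_imset (can_in_inj fK)).
apply: eq_card => y; apply/imsetP/idP => [[x xA ->]|yB]; first exact: fA.
by exists (g y); [apply: gB | rewrite gK].
Qed.

Lemma card_eqrels_bij {T T' : finType} (f : T' -> T) (g : T -> T') :
  cancel f g -> cancel g f -> #|eqrels T| = #|eqrels T'|.
Proof.
move=> fK gK; apply: (card_bij (f := pb f) (g := pb g)).
- by move=> R; rewrite !inE; apply: pb_eq.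
- by move=> R; rewrite !inE; apply: pb_eq.
- by move=> R _; rewrite pb_comp (pb_ext _ gK) pb_id.
by move=> R _; rewrite pb_comp (pb_ext _ fK) pb_id.
Qed.

Lemma eq_equivalence_partition {T : finType} (R1 R2 : rel T) (D : {set T}) :
  (forall x y, R1 x y = R2 x y) -> equivalence_partition R1 D = equivalence_partition R2 D.
Proof.
move=> e; rewrite /equivalence_partition; apply: eq_imset => x.
by apply/setP => y; rewrite !inE e.
Qed.

Lemma card_part_eqrels (T : finType) :
  #|[set P : {set {set T}} | partition P [set: T]]| = #|eqrels T|.
Proof.
pose f (P : {set {set T}}) : {set T * T} := [set xy | xy.2 \in pblock P xy.1].
pose g (R : {set T * T}) := equivalence_partition (fun x y => (x, y) \in R) [set: T].
have eqR : forall R : {set T * T}, isEq R ->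
    {in [set: T] & &, equivalence_rel (fun x y => (x, y) \in R)}.
  move=> R /isEqP[r [s t]] x y z _ _ _; split; first exact: r.
  by move=> hxy; apply/idP/idP => h; [apply: t (s _ _ hxy) h | apply: t hxy h].
apply: (card_bij (f := f) (g := g)).
- move=> P; rewrite !inE => hP; apply/isEqP.
  have E := pblock_equivalence hP.
  have E' : forall x y z, (z \in pblock P z) * ((y \in pblock P x) ->
       (z \in pblock P x) = (z \in pblock P y)) := fun x y z => E x y z (in_setT x) (in_setT y) (in_setT z).
  split; first by move=> x; rewrite inE /=; apply: (E' x x x).1.
  split.
    move=> x y; rewrite !inE /= => hxy.
    by rewrite -((E' x y x).2 hxy); apply: (E' x x x).1.
  by move=> x y z; rewrite !inE /= => hxy hyz; rewrite ((E' x y z).2 hxy).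
- by move=> R; rewrite !inE => hR; apply: equivalence_partitionP; apply: eqR.
- move=> P; rewrite inE => hP; rewrite /g.
  rewrite (eq_equivalence_partition (R2 := fun x y => y \in pblock P x)).
    exact: equivalence_partition_pblock.
  by move=> x y; rewrite inE.
move=> R; rewrite inE => hR; apply/setP => -[x y]; rewrite inE /=.
by rewrite (pblock_equivalence_partition (eqR R hR)) ?in_setT.
Qed.

Lemma bellE (T : finType) : #|eqrels T| = bell #|T|.
Proof.
rewrite /bell card_part_eqrels.
exact: (card_eqrels_bij (f := enum_val) (g := enum_rank) (@enum_valK T) (@enum_rankK T)).
Qed.

Lemma bell0 : bell 0 = 1.
Proof.
have := @bellE 'I_0; rewrite card_ord => <-.
have -> : eqrels 'I_0 = [set set0].
  apply/setP => R; rewrite !inE.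
  have -> : R = set0 by apply/setP => -[[]].
  rewrite eqxx; apply/isEqP; split; first by case.
  by split; case.
by rewrite cards1.
Qed.

Lemma relsame {T : finType} (R : {set T * T}) x x' y y' : isEq R ->
  (x, x') \in R -> (y, y') \in R -> ((x, y) \in R) = ((x', y') \in R).
Proof.
case/isEqP => r [s t] hx hy; apply/idP/idP => h.
  exact: t (t _ _ _ (s _ _ hx) h) hy.
exact: t hx (t _ _ _ h (s _ _ hy)).
Qed.

Section Touchard.
Context (p : nat) (pp : prime p) (n : nat).
Local Notation T := ('I_n + 'F_p)%type.

Definition srot (x : T) : T := match x with inl a => inl a | inr j => inr (j + 1) end.
Definition srot' (x : T) : T := match x with inl a => inl a | inr j => inr (j - 1) end.

Lemma srotK x : srot (srot' x) = x.
Proof. by case: x => //= j; rewrite subrK. Qed.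

Definition phi (R : {set T * T}) := pb srot R.

Lemma phi_inj : injective phi.
Proof.
by apply: (can_inj (g := pb srot')) => R; rewrite /phi pb_comp (pb_ext _ srotK) pb_id.
Qed.

Definition sigma : {perm {set T * T}} := perm phi_inj.

Lemma iter_srotl k a : iter k srot (inl a) = inl a.
Proof. by elim: k => //= k ->. Qed.

Lemma iter_srotr k j : iter k srot (inr j) = inr (j + k%:R).
Proof. by elim: k => [|k IH] /=; rewrite ?addr0 // IH mulrSr addrA. Qed.

Lemma iter_pb {T' : finType} k (f : T' -> T') (R : {set T' * T'}) :
  iter k (pb f) R = pb (iter k f) R.
Proof.
elim: k => [|k IH]; first by rewrite /= pb_id.
by rewrite iterS IH pb_comp; apply: pb_ext => x; rewrite iterSr.
Qed.

Lemma sigma_p : (sigma ^+ p = 1)%g.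
Proof.
apply/permP => R; rewrite permX perm1 (eq_iter (permE phi_inj)) /phi iter_pb.
rewrite -[RHS]pb_id; apply: pb_ext => -[a|j]; first by rewrite iter_srotl.
by rewrite iter_srotr pchar_Fp_0 // addr0.
Qed.

Lemma pG : (p.-group <[sigma]>)%g.
Proof.
rewrite /pgroup -orderE; apply: pnat_dvd (pnat_id pp).
by rewrite order_dvdn sigma_p.
Qed.

Local Notation S := (eqrels T).

Lemma actsS : ([acts <[sigma]>, on S | 'P])%g.
Proof.
rewrite cycle_subG; apply/astabsP => R; rewrite /= apermE permE /phi !inE.
apply/idP/idP => [h|]; last exact: pb_eq.
by have := pb_eq srot' h; rewrite pb_comp (pb_ext _ srotK) pb_id.
Qed.

Lemma fixmod : #|S| = #|('Fix_(S | 'P)[sigma])%g| %[mod p].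
Proof. by rewrite -afix_cycle; apply: pgroup_fix_mod pG actsS. Qed.


Definition Aset := [set R in S | [forall j : 'F_p, (inr j, inr 0) \in R]].
Definition Bset := [set R in S | [forall j : 'F_p, forall y : T, ((inr j, y) \in R) ==> (y == inr j)]].

Lemma fixP R : (R \in ('Fix_'P[sigma])%g) = (phi R == R).
Proof. by apply/afix1P/eqP => /=; rewrite apermE permE. Qed.

Lemma invk R : phi R = R -> forall k x y, ((iter k srot x, iter k srot y) \in R) = ((x, y) \in R).
Proof.
move=> e k x y; have h : iter k phi R = R.
  by elim: k => [|k IH] //; rewrite iterS IH.
by move: h; rewrite /phi iter_pb => h; rewrite -{2}h in_pb.
Qed.

Lemma shiftR R : phi R = R -> forall (c x y : 'F_p),
  ((inr (x + c), inr (y + c)) \in R) = ((inr x, inr y) \in R).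
Proof. by move=> e c x y; have := invk e (val c) (inr x) (inr y); rewrite !iter_srotr natr_Zp. Qed.

Lemma shiftL R : phi R = R -> forall (c : 'F_p) a (y : 'F_p),
  ((inl a, inr (y + c)) \in R) = ((inl a, inr y) \in R).
Proof. by move=> e c a y; have := invk e (val c) (inl a) (inr y); rewrite iter_srotl !iter_srotr natr_Zp. Qed.

Lemma fix_sub R : R \in S -> phi R = R -> R \in Aset :|: Bset.
Proof.
move=> RS e; have RS' := RS; rewrite inE in RS'; have /isEqP[r [s t]] := RS'.
rewrite !inE RS' /=.
case: (boolP [forall j, (inr j, inr 0) \in R]) => hA //=.
apply/forallP => j; apply/forallP => y; apply/implyP => hjy; apply: contraT => ne.
case/negP: hA; apply/forallP => t0.
case: y hjy ne => [a|y'] hjy ne.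
- have hat : forall t1, (inl a, inr t1) \in R.
    move=> t1; have := shiftL e (t1 - j) a j.
    have -> : j + (t1 - j) = t1 by ring.
    by move=> ->; apply: s.
  exact: t (s _ _ (hat t0)) (hat 0).
- have d0 : y' - j != 0 by rewrite subr_eq0; apply: contra ne => /eqP ->.
  have step : forall c, (inr c, inr (c + (y' - j))) \in R.
    move=> c; have := shiftR e (c - j) j y'.
    have -> : j + (c - j) = c by ring.
    have -> : y' + (c - j) = c + (y' - j) by ring.
    by move=> ->.
  have mult : forall m : nat, (inr 0, inr (m%:R * (y' - j))) \in R.
    elim=> [|m IH]; first by rewrite mul0r; apply: r.
    by apply: t IH _; rewrite mulrSr mulrDl mul1r; apply: step.
  have := mult (val (t0 / (y' - j))); rewrite natr_Zp divfK // => h.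
  exact: s.
Qed.

Lemma sub_fix R : R \in Aset :|: Bset -> phi R = R.
Proof.
rewrite !inE => /orP[/andP[RS hA]|/andP[RS hB]]; have /isEqP[r [s t]] := RS.
  have hx : forall z, (srot z, z) \in R.
    case=> [a|j] /=; first exact: r.
    exact: t (forallP hA (j + 1)) (s _ _ (forallP hA j)).
  by apply/setP => -[x y]; rewrite in_pb; apply: relsame.
have Bc : forall j z, ((inr j, z) \in R) = (z == inr j).
  move=> j z; apply/idP/eqP => [h|->]; last exact: r.
  by apply/eqP; exact: (implyP (forallP (forallP hB j) z) h).
have Bc' : forall j z, ((z, inr j) \in R) = (z == inr j).
  by move=> j z; rewrite -Bc; apply/idP/idP; apply: s.
apply/setP => -[x y]; rewrite in_pb.
case: x => [a|j]; case: y => [b|k] //=; rewrite ?Bc ?Bc' //.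
have E : forall a b : 'F_p, (inr a == inr b :> T) = (a == b) by [].
rewrite !E; apply/eqP/eqP => [|->] //; exact: addIr.
Qed.


Lemma fix_eq : (S :&: 'Fix_'P[sigma])%g = Aset :|: Bset.
Proof.
apply/setP => R; rewrite inE fixP; apply/andP/idP => [[RS /eqP e]|h].
  exact: fix_sub.
split; last by apply/eqP; apply: sub_fix.
by move: h; rewrite !inE => /orP[/andP[]|/andP[]].
Qed.

Lemma disjAB : Aset :&: Bset = set0.
Proof.
apply/setP => R; rewrite inE in_set0; apply/negP => /andP[].
rewrite !inE => /andP[_ hA] /andP[_ hB].
have := implyP (forallP (forallP hB 1) (inr 0)) (forallP hA 1).
have E : forall a b : 'F_p, (inr a == inr b :> T) = (a == b) by [].
by rewrite E eq_sym oner_eq0.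
Qed.

Local Notation T1 := ('I_n + unit)%type.
Definition e1 (x : T1) : T := match x with inl a => inl a | inr _ => inr 0 end.
Definition c1 (x : T) : T1 := match x with inl a => inl a | inr _ => inr tt end.

Lemma cardA : #|Aset| = #|eqrels T1|.
Proof.
apply: (card_bij (f := pb e1) (g := pb c1)).
- by move=> R; rewrite !inE => /andP[h _]; apply: pb_eq.
- move=> R; rewrite !inE => h; rewrite pb_eq //=.
  by apply/forallP => j; rewrite in_pb /=; case/isEqP: h.
- move=> R; rewrite !inE => /andP[RS hA]; rewrite pb_comp.
  have /isEqP[r [s t]] := RS.
  have hx : forall z, (e1 (c1 z), z) \in R.
    by case=> [a|j] /=; [apply: r | apply: s; apply: (forallP hA j)].
  by apply/setP => -[x y]; rewrite in_pb; apply: relsame.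
move=> R _; rewrite pb_comp -[RHS]pb_id; apply: pb_ext.
by case=> [a|[]].
Qed.

Definition ext (R : {set 'I_n * 'I_n}) : {set T * T} :=
  [set xy | match xy with (inl a, inl b) => (a, b) \in R
            | (inr j, inr k) => j == k | _ => false end].

Lemma cardB : #|Bset| = #|eqrels 'I_n|.
Proof.
apply: (card_bij (f := pb (@inl 'I_n 'F_p)) (g := ext)).
- by move=> R; rewrite !inE => /andP[h _]; apply: pb_eq.
- move=> R; rewrite !inE => /isEqP[r [s t]]; apply/andP; split.
    apply/isEqP; split; first by case=> [a|j]; rewrite inE //=.
    split.
      by case=> [a|j] [b|k]; rewrite !inE //=; [apply: s | rewrite eq_sym].
    case=> [a|j] [b|k] [c|l]; rewrite !inE //=; first exact: t.
    by move=> /eqP -> /eqP ->.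
  apply/forallP => j; apply/forallP => -[b|k]; rewrite inE //=.
  have E : forall a b : 'F_p, (inr a == inr b :> T) = (a == b) by [].
  by rewrite E eq_sym implybb.
- move=> R; rewrite !inE => /andP[RS hB]; have /isEqP[r [s t]] := RS.
  have Bc : forall j z, ((inr j, z) \in R) = (z == inr j).
    move=> j z; apply/idP/eqP => [h|->]; last exact: r.
    by apply/eqP; exact: (implyP (forallP (forallP hB j) z) h).
  have Bc' : forall j z, ((z, inr j) \in R) = (z == inr j).
    by move=> j z; rewrite -Bc; apply/idP/idP; apply: s.
  apply/setP => -[[a|j] [b|k]]; rewrite inE /= ?in_pb ?Bc ?Bc' //.
  have E : forall a b : 'F_p, (inr a == inr b :> T) = (a == b) by [].
  by rewrite E eq_sym.
by move=> R _; apply/setP => -[a b]; rewrite in_pb inE.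
Qed.

Lemma touchard : bell (n + p) = bell n.+1 + bell n %[mod p].
Proof.
have cT : #|{: T}| = (n + p)%N by rewrite card_sum card_ord card_Fp.
rewrite -cT -bellE fixmod fix_eq cardsU disjAB cards0 subn0 cardA cardB !bellE.
by rewrite card_sum card_unit card_ord addn1.
Qed.

End Touchard.

Close Scope ring_scope.

Theorem theorem3 (p : nat) (a : nat -> nat) :
  prime p ->
  (forall k, k < p.-1 -> a k < p) ->
  0 < \sum_(k < p.-1) a k * p ^ k ->
  (forall n, bell (n + \sum_(k < p.-1) a k * p ^ k) = bell n %[mod p]) ->
  p.+1 <= \sum_(k < p.-1) a k.
Proof.
move=> pp _ P0 hP.
pose u n := ((bell n)%:R : 'F_p)%R.
apply: (alg_main pp (u := u)) => //.
- by rewrite /u bell0.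
- move=> n; rewrite /u -(Fp_nat_mod pp (bell (n + p))) touchard //.
  by rewrite (Fp_nat_mod pp) natrD addrC.
- by move=> n; rewrite /u -(Fp_nat_mod pp) hP (Fp_nat_mod pp).
Qed.
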